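(* Consider Algorithm 3 (described in the context) under the Standing Assumption, Matrix Assumption and Gradient Assumption of the context. Let $\mathbb{P}_k$ denote probability conditioned on the algorithm having reached $x_k$ at iteration $k$. If there exists $p\in(0,1]$ such that for all $k\in\mathbb{N}$, $$\mathbb{P}_k\big[\bar g_k^T\bar d_k+\max\{\bar d_k^TH_k\bar d_k,0\}\ge g_k^Td_k+\max\{d_k^TH_kd_k,0\}\big]\ge p,$$ then the event $E_{\tau,big}$ occurs with probability zero, where $E_{\tau,big}$ is the event that there exist an infinite set $\overline{\mathcal K}_\tau\subseteq\mathbb{N}$ and $\bar\tau_{big}>0$ such that $\bar\tau_k=\bar\tau_{big}>\tau_k^{trial}$ and $\bar\xi_k=\bar\xi_{\min}$ for all $k\in\overline{\mathcal K}_\tau$.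
   Context: Problem: $\min_x f(x)$ s.t. $c(x)=0$, $f(x)=\mathbb{E}[F(x,\omega)]$, $c:\mathbb{R}^n\to\mathbb{R}^m$ deterministic. Notation: $g_k=\nabla f(x_k)$, $c_k=c(x_k)$, $J_k=\nabla c(x_k)^T$; $\Delta q(x,\tau,g,H,d)=-\tau(g^Td+\frac12\max\{d^THd,0\})+\|c(x)\|_1$. Standing Assumption: there is an open convex set $\mathcal X$ containing all iterates; $f$ is $C^1$ and bounded below on $\mathcal X$ with $\nabla f$ bounded and $L$-Lipschitz on $\mathcal X$; $c$ and $\nabla c^T$ bounded on $\mathcal X$; each $\nabla c_i$ is $\gamma_i$-Lipschitz on $\mathcal X$; singular values of $\nabla c(x)^T$ bounded away from zero uniformly over $\mathcal X$. $\Gamma:=\sum_i\gamma_i$. Matrix Assumption: deterministic symmetric $H_k$, chosen independently of the stochastic gradients, with $\|H_k\|_2\le\kappa_H$ and $u^TH_ku\ge\zeta\|u\|_2^2$ whenever $J_ku=0$. Algorithm 3 (inputs $x_0$, $\bar\tau_{-1}>0$, $\epsilon,\sigma\in(0,1)$, $\bar\xi_{-1}>0$, $\{\beta_k\}\subset(0,1]$, $\theta\ge0$): at iteration $k$, obtain stochastic gradient $\bar g_k$; $(\bar d_k,\bar y_k)$ solves $H_k\bar d_k+J_k^T\bar y_k=-\bar g_k$, $J_k\bar d_k=-c_k$ (assumed $\bar d_k\ne0$). $\bar\tau_k^{trial}=\infty$ if $\bar g_k^T\bar d_k+\max\{\bar d_k^TH_k\bar d_k,0\}\le0$, else $\frac{(1-\sigma)\|c_k\|_1}{\bar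 g_k^T\bar d_k+\max\{\bar d_k^TH_k\bar d_k,0\}}$; $\bar\tau_k=\bar\tau_{k-1}$ if $\bar\tau_{k-1}\le\bar\tau_k^{trial}$, else $(1-\epsilon)\bar\tau_k^{trial}$. $\bar\xi_k^{trial}=\frac{\Delta q(x_k,\bar\tau_k,\bar g_k,H_k,\bar d_k)}{\bar\tau_k\|\bar d_k\|_2^2}$; $\bar\xi_k=\bar\xi_{k-1}$ if $\bar\xi_{k-1}\le\bar\xi_k^{trial}$, else $(1-\epsilon)\bar\xi_k^{trial}$. With $D_k=(\bar\tau_kL+\Gamma)\|\bar d_k\|_2^2$, $\hat a_k=\beta_k\Delta q(x_k,\bar\tau_k,\bar g_k,H_k,\bar d_k)/D_k$, $\tilde a_k=\hat a_k-4\|c_k\|_1/D_k$, project both onto $[a_k,a_k+\theta\beta_k^2]$, $a_k=\frac{\beta_k\bar\xi_k\bar\tau_k}{\bar\tau_kL+\Gamma}$, giving $\widehat\alpha_k,\widetilde\alpha_k$; $\bar\alpha_k=\widehat\alpha_k$ if $\widehat\alpha_k<1$, $1$ if $\widetilde\alpha_k\le1\le\widehat\alpha_k$, $\widetilde\alpha_k$ if $\widetilde\alpha_k>1$; $x_{k+1}=x_k+\bar\alpha_k\bar d_k$. $\bar\xi_{\min}$ denotes the limit of the nonincreasing positive sequence $\{\bar\xi_k\}$. Gradient Assumption: $\mathbb{E}_k[\bar g_k]=g_k$, $\mathbb{E}_k[\|\bar g_k-g_k\|_2^2]\le M$, with $\mathbb{E}_k$ conditioned on reaching $x_k$ at iteration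 $k$. Deterministic counterparts: $(d_k,y_k)$ solves the same system with $g_k$ in place of $\bar g_k$; $\tau_k^{trial}=\infty$ if $g_k^Td_k+\max\{d_k^TH_kd_k,0\}\le0$, else $\frac{(1-\sigma)\|c_k\|_1}{g_k^Td_k+\max\{d_k^TH_kd_k,0\}}$. *)

(* Defs.v *)
From HB Require Import structures.
From mathcomp Require Import all_boot all_order all_algebra.
From mathcomp Require Import all_classical all_reals all_analysis.
Set Implicit Arguments. Unset Strict Implicit. Unset Printing Implicit Defensive.
Import Order.TTheory GRing.Theory Num.Theory numFieldNormedType.Exports.
Local Open Scope ring_scope.
Local Open Scope classical_set_scope.

Section LinAlg.
Context {R : realType}.

Definition norm2 {k : nat} (v : 'cV[R]_k) : R := Num.sqrt (\sum_i (v i 0) ^+ 2).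
Definition norm1 {k : nat} (v : 'cV[R]_k) : R := \sum_i `|v i 0|.
Definition sc {k : nat} (u v : 'cV[R]_k) : R := (u^T *m v) 0 0.

Definition opnorm_le {a b : nat} (A : 'M[R]_(a, b)) (K : R) : Prop :=
  forall v : 'cV[R]_b, norm2 (A *m v) <= K * norm2 v.

Definition curv {k : nat} (gv dv : 'cV[R]_k) (H : 'M[R]_k) : R :=
  sc gv dv + Num.max (sc dv (H *m dv)) 0.

Definition tau_trial {mm k : nat} (sigma : R) (cv : 'cV[R]_mm) (gv dv : 'cV[R]_k)
  (H : 'M[R]_k) : \bar R :=
  if curv gv dv H <= 0 then +oo%E
  else ((1 - sigma) * norm1 cv / curv gv dv H)%:E.

Definition tau_update (eps prev : R) (trial : \bar R) : R :=
  if (prev%:E <= trial)%E then prev else (1 - eps) * fine trial.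

(* Delta q(x, tau, g, H, d) with cv = c(x) *)
Definition Delta_q {mm k : nat} (cv : 'cV[R]_mm) (tau : R) (gv : 'cV[R]_k)
  (H : 'M[R]_k) (dv : 'cV[R]_k) : R :=
  - tau * (sc gv dv + 2^-1 * Num.max (sc dv (H *m dv)) 0) + norm1 cv.

Definition xi_trial {mm k : nat} (cv : 'cV[R]_mm) (tau : R) (gv : 'cV[R]_k)
  (H : 'M[R]_k) (dv : 'cV[R]_k) : R :=
  Delta_q cv tau gv H dv / (tau * norm2 dv ^+ 2).

Definition xi_update (eps prev trial : R) : R :=
  if prev <= trial then prev else (1 - eps) * trial.

Definition proj (lo hi v : R) : R := Num.min hi (Num.max lo v).

Definition step_size {mm k : nat} (L Gamma theta beta tau xi : R) (cv : 'cV[R]_mm)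
  (gv : 'cV[R]_k) (H : 'M[R]_k) (dv : 'cV[R]_k) : R :=
  let D := (tau * L + Gamma) * norm2 dv ^+ 2 in
  let ahat := beta * Delta_q cv tau gv H dv / D in
  let atil := ahat - 4 * norm1 cv / D in
  let a := beta * xi * tau / (tau * L + Gamma) in
  let alh := proj a (a + theta * beta ^+ 2) ahat in
  let alt := proj a (a + theta * beta ^+ 2) atil in
  if alh < 1 then alh else if alt <= 1 then 1 else alt.

End LinAlg.

Section Prob.
Context {R : realType} {d : measure_display} {T : measurableType d}.

Definition gen_sigma (F : set (T -> R)) : set (set T) :=
  <<s [set B | exists2 h, F h & exists2 A : set R, measurable A & B = h @^-1` A] >>.

Definition entries {a b : nat} (A : T -> 'M[R]_(a, b)) : set (T -> R) :=
  [set h | exists i j, h = fun w => A w i j].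

(* quantities known at the start of iteration k (once x_k is reached) *)
Definition alg3_state {n m : nat} (H : nat -> 'cV[R]_n -> 'M[R]_n)
  (gradf : 'cV[R]_n -> 'cV[R]_n) (c : 'cV[R]_n -> 'cV[R]_m)
  (J : 'cV[R]_n -> 'M[R]_(m, n)) (x : nat -> T -> 'cV[R]_n)
  (dd : nat -> T -> 'cV[R]_n) (y : nat -> T -> 'cV[R]_m) (k : nat) : set (T -> R) :=
  entries (x k) `|` entries (fun w => H k (x k w)) `|` entries (fun w => gradf (x k w))
  `|` entries (fun w => c (x k w)) `|` entries (fun w => J (x k w))
  `|` entries (dd k) `|` entries (y k).

(* quantities computed during iteration k (after drawing gbar_k) *)
Definition alg3_stoch {n m : nat} (gbar dbar : nat -> T -> 'cV[R]_n)
  (ybar : nat -> T -> 'cV[R]_m) (taubar xibar alpha : nat -> T -> R) (k : nat)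
  : set (T -> R) :=
  entries (gbar k) `|` entries (dbar k) `|` entries (ybar k)
  `|` [set taubar k] `|` [set xibar k] `|` [set alpha k].

Definition history_sigma (state stoch : nat -> set (T -> R)) (k : nat) : set (set T) :=
  gen_sigma (fun h => exists j, ((j <= k)%N /\ state j h) \/ ((j < k)%N /\ stoch j h)).

End Prob.

(* Main.v *)
Require Import Defs.
From HB Require Import structures.
From mathcomp Require Import all_boot all_order all_algebra.
From mathcomp Require Import all_classical all_reals all_analysis.
From mathcomp Require Import ring lra.

Import Order.TTheory GRing.Theory Num.Theory numFieldNormedType.Exports.
Local Open Scope ring_scope.
Local Open Scope classical_set_scope.

Section Abstract.
Context (R : realType) (dd : measure_display) (T : measurableType dd)
  (P : probability T R).
Variables (F : nat -> set (set T)) (A G : nat -> set T) (p : R).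
Hypothesis hFm : forall {j B}, F j B -> measurable B.
Hypothesis hFT : forall j, F j setT.
Hypothesis hFI : forall {j B C}, F j B -> F j C -> F j (B `&` C).
Hypothesis hFS : forall {j B}, F j B -> F j.+1 B.
Hypothesis hA : forall j, F j (A j).
Hypothesis hAc : forall j, F j (~` A j).
Hypothesis hG : forall j, F j.+1 (~` G j).
Hypothesis hp : forall {j B}, F j B -> (p%:E * P B <= P (G j `&` B))%E.
Hypothesis p01 : 0 < p <= 1.

Let mA j : measurable (A j). Proof. exact: hFm (hA j). Qed.
Let mG j : measurable (G j).
Proof. by rewrite -(setCK (G j)); apply: measurableC; exact: hFm (hG j). Qed.

Let Q (X : set T) : R := fine (P X).
Let PE X : measurable X -> P X = (Q X)%:E.
Proof. by move=> mX; rewrite /Q fineK // fin_num_measure. Qed.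
Let Qge0 X : 0 <= Q X.
Proof. by rewrite /Q fine_ge0 // measure_ge0. Qed.
Let Q0 : Q set0 = 0.
Proof. by rewrite /Q measure0. Qed.
Let QU X Y : measurable X -> measurable Y -> X `&` Y = set0 ->
  Q (X `|` Y) = Q X + Q Y.
Proof.
move=> mX mY XY; rewrite /Q measureU // fineD // fin_num_measure //.
Qed.
Let QDI X Y : measurable X -> measurable Y -> Q X = Q (X `&` ~` Y) + Q (X `&` Y).
Proof.
move=> mX mY; rewrite /Q (measureDI P mX mY) fineD // fin_num_measure //.
- exact: measurableD.
- exact: measurableI.
Qed.

Let q := 1 - p.
Let q_ge0 : 0 <= q. Proof. rewrite /q; case/andP: p01 => ? ?; lra. Qed.

Lemma key_fail j B : F j B -> Q (B `&` ~` G j) <= q * Q B.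
Proof.
move=> FB; have mB := hFm FB.
have := hp FB; rewrite (setIC (G j) B) (PE _ mB) (PE _ (measurableI _ _ mB (mG j))) lee_fin.
rewrite (QDI B (G j) mB (mG j)) => h.
rewrite /q; nra.
Qed.

Fixpoint W (L j N : nat) : set T :=
  match L with
  | 0 => if N is 0 then setT else set0
  | L'.+1 => if N is N'.+1 then
       (~` A j `&` W L' j.+1 N) `|` (A j `&` ~` G j `&` W L' j.+1 N')
     else setT
  end.

Lemma mW L j N : measurable (W L j N).
Proof.
elim: L j N => [|L IH] j [|N] //=.
apply: measurableU; apply: measurableI => //; try apply: measurableI => //;
  exact: measurableC.
Qed.

Lemma boundW L : forall j N B, F j B -> Q (B `&` W L j N) <= q ^+ N * Q B.
Proof.
elim: L => [|L IH] j [|N] B FB /=.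
- by rewrite setIT expr0 mul1r.
- by rewrite setI0 Q0 mulr_ge0 // exprn_ge0.
- by rewrite setIT expr0 mul1r.
have mB := hFm FB.
have mX : measurable (B `&` (~` A j `&` W L j.+1 N.+1)).
  by apply: measurableI => //; apply: measurableI; [exact: measurableC | exact: mW].
have mY : measurable (B `&` (A j `&` ~` G j `&` W L j.+1 N)).
  by apply: measurableI => //; apply: measurableI; [apply: measurableI => //; exact: measurableC | exact: mW].
rewrite setIUr QU //; last first.
  rewrite -subset0 => w [[_ [nA _]] [_ [[a _] _]]]; exact: nA a.
rewrite setIA (_ : B `&` (A j `&` ~` G j `&` W L j.+1 N) = (B `&` A j `&` ~` G j) `&` W L j.+1 N); last by rewrite !setIA.
have h1 := IH j.+1 N.+1 _ (hFS (hFI FB (hAc j))).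
have FBA : F j.+1 (B `&` A j `&` ~` G j) by apply: hFI; [exact: hFS (hFI FB (hA j)) | exact: hG].
have h2 := IH j.+1 N _ FBA.
have h3 := key_fail _ _ (hFI FB (hA j)).
have h4 : q ^+ N * Q (B `&` A j `&` ~` G j) <= q ^+ N * (q * Q (B `&` A j)).
  by apply: ler_wpM2l => //; exact: exprn_ge0.
rewrite (QDI B (A j) mB (mA j)) exprS.
have := Qge0 (B `&` ~` A j); have := exprn_ge0 N q_ge0 => ? ?.
rewrite exprS in h1; nra.
Qed.

Lemma W_mono L j N : W L j N `<=` W L.+1 j N.
Proof.
elim: L j N => [|L IH] j [|N] /= w //.
move=> [[a h]|[b h]]; [left|right]; split => //; exact: (IH _ _ _ h).
Qed.

Lemma W_io w N : forall j, (forall k, (j <= k)%N -> A k w -> ~ G k w) ->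
  (forall k, exists2 k', (k <= k')%N & A k' w) -> exists L, W L j N w.
Proof.
elim: N => [|N IHN] j hf hio; first by exists 0%N.
have [k' jk' Ak'] := hio j.
suff: forall e j', (forall k, (j' <= k)%N -> A k w -> ~ G k w) -> A (j' + e)%N w ->
  exists L, W L j' N.+1 w.
  by move/(_ (k' - j)%N j hf); rewrite subnKC //; apply.
elim => [|e IHe] j' hf' Ae.
- rewrite addn0 in Ae.
  have [L HL] := IHN j'.+1 (fun k hk => hf' k (ltnW hk)) hio.
  exists L.+1; right; split => //; split => //; exact: hf'.
- have [Aj|nAj] := pselect (A j' w).
  + have [L HL] := IHN j'.+1 (fun k hk => hf' k (ltnW hk)) hio.
    exists L.+1; right; split => //; split => //; exact: hf'.
  + have := IHe j'.+1 (fun k hk => hf' k (ltnW hk)); rewrite addSnnS => /(_ Ae) [L HL].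
    by exists L.+1; left; split.
Qed.

Lemma negl_io k0 : P.-negligible [set w | (forall k, (k0 <= k)%N -> A k w -> ~ G k w)
   /\ (forall k, exists2 k', (k <= k')%N & A k' w)].
Proof.
exists (\bigcap_N \bigcup_L W L k0 N); split.
- by apply: bigcapT_measurable => N; apply: bigcupT_measurable => L; exact: mW.
- have hN N : (P (\bigcap_N \bigcup_L W L k0 N) <= (q ^+ N)%:E)%E.
    apply: (@le_trans _ _ (P (\bigcup_L W L k0 N))).
      apply: le_measure; rewrite ?inE.
      + by apply: bigcapT_measurable => N'; apply: bigcupT_measurable => L; exact: mW.
      + by apply: bigcupT_measurable => L; exact: mW.
      + by move=> w; apply.
    have hc := nondecreasing_cvg_mu (mu:=P) (fun L => mW L k0 N)
      (bigcupT_measurable _ (fun L => mW L k0 N))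
      (proj1 (nondecreasing_seqP _) (fun L => introT (subsetPset _ _) (W_mono L k0 N))).
    rewrite -(cvg_lim _ hc) //.
    apply: lime_le; first exact: cvgP hc.
    apply: nearW => L /=.
    rewrite (PE _ (mW L k0 N)) lee_fin.
    have := boundW L k0 N _ (hFT k0); rewrite setTI.
    by rewrite /Q probability_setT /= mulr1.
  have mZ : measurable (\bigcap_N \bigcup_L W L k0 N).
    by apply: bigcapT_measurable => N; apply: bigcupT_measurable => L; exact: mW.
  rewrite (PE _ mZ); congr (_%:E); apply/eqP; rewrite eq_le Qge0 andbT.
  have hc : (fun N => q ^+ N) @ \oo --> 0.
    apply: cvg_expr; rewrite ger0_norm //; rewrite /q; case/andP: p01 => ? ?; lra.
  rewrite -(cvg_lim _ hc) //.
  apply: limr_ge; first exact: cvgP hc.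
  by apply: nearW => N; have := hN N; rewrite (PE _ mZ) lee_fin.
- by move=> w [hf hio] N _; have [L HL] := W_io w N k0 hf hio; exists L.
Qed.

End Abstract.

Section Meas.
Context (R : realType) (dd : measure_display) (T : measurableType dd).
Local Notation mf f := (measurable_fun setT f).

Lemma msc k (u v : T -> 'cV[R]_k) :
  (forall i, mf (fun w => u w i 0)) -> (forall i, mf (fun w => v w i 0)) ->
  mf (fun w => sc (u w) (v w)).
Proof.
move=> mu mv.
have -> : (fun w => sc (u w) (v w)) = (fun w => \sum_(i < k) u w i 0 * v w i 0).
  apply/funext => w; rewrite /sc mxE; apply: eq_bigr => i _; by rewrite mxE.
by apply: measurable_sum => i; exact: measurable_realfun.measurable_funM.
Qed.

Lemma mmulmx k (Hm : T -> 'M[R]_k) (v : T -> 'cV[R]_k) :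
  (forall i j, mf (fun w => Hm w i j)) -> (forall i, mf (fun w => v w i 0)) ->
  forall i, mf (fun w => (Hm w *m v w) i 0).
Proof.
move=> mH mv i.
have -> : (fun w => (Hm w *m v w) i 0) = (fun w => \sum_(j < k) Hm w i j * v w j 0).
  by apply/funext => w; rewrite mxE.
by apply: measurable_sum => j; exact: measurable_realfun.measurable_funM.
Qed.

Lemma mcurv k (u v : T -> 'cV[R]_k) (Hm : T -> 'M[R]_k) :
  (forall i, mf (fun w => u w i 0)) -> (forall i, mf (fun w => v w i 0)) ->
  (forall i j, mf (fun w => Hm w i j)) ->
  mf (fun w => curv (u w) (v w) (Hm w)).
Proof.
move=> mu mv mH; rewrite /curv.
apply: measurable_realfun.measurable_funD; first exact: msc.
apply: measurable_realfun.measurable_maxr; last exact: measurable_cst.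
by apply: msc => //; exact: mmulmx.
Qed.

Lemma mnorm1 k (u : T -> 'cV[R]_k) :
  (forall i, mf (fun w => u w i 0)) -> mf (fun w => norm1 (u w)).
Proof.
move=> mu; rewrite /norm1; apply: measurable_sum => i.
exact: (measurableT_comp (@measurable_realfun.normr_measurable R setT) (mu i)).
Qed.

Lemma mset_lt (f g : T -> R) : mf f -> mf g -> measurable [set w | f w < g w].
Proof.
move=> mf1 mg.
have -> : [set w | f w < g w] = setT `&` (fun w => g w - f w) @^-1` `]0, +oo[.
  by apply/seteqP; split => w /=; rewrite in_itv /= andbT subr_gt0 // => -[].
by apply: measurable_realfun.measurable_funB => //; exact: measurable_itv.
Qed.

Lemma mset_le (f g : T -> R) : mf f -> mf g -> measurable [set w | f w <= g w].
Proof.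
move=> mf1 mg.
have -> : [set w | f w <= g w] = setT `&` (fun w => g w - f w) @^-1` `[0, +oo[.
  by apply/seteqP; split => w /=; rewrite in_itv /= andbT subr_ge0 // => -[].
by apply: measurable_realfun.measurable_funB => //; exact: measurable_itv.
Qed.

End Meas.

Section Det.
Context (R : realType).

Lemma norm1_ge0 k (v : 'cV[R]_k) : 0 <= norm1 v.
Proof. by rewrite /norm1 sumr_ge0. Qed.

Lemma upd_le (eps sigma pv : R) mm k (cv : 'cV[R]_mm) (g dv : 'cV[R]_k) (Hm : 'M[R]_k) :
  0 < eps < 1 -> 0 < sigma < 1 ->
  tau_update eps pv (tau_trial sigma cv g dv Hm) <= pv.
Proof.
move=> /andP[e0 e1] /andP[s0 s1]; rewrite /tau_update; case: ifP => // h.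
move: h; rewrite /tau_trial; case: ifP => hc; first by rewrite leey.
move/negbT; rewrite -ltNge lte_fin /= => hlt.
have cpos : 0 < curv g dv Hm by rewrite ltNge hc.
have r0 : 0 <= (1 - sigma) * norm1 cv / curv g dv Hm.
  by apply: divr_ge0; [apply: mulr_ge0; [lra | exact: norm1_ge0] | exact: ltW].
nra.
Qed.

Lemma upd_lt (eps sigma pv : R) mm k (cv : 'cV[R]_mm) (g gb dv db : 'cV[R]_k)
  (Hm : 'M[R]_k) :
  0 < eps < 1 -> 0 < sigma < 1 ->
  0 < curv g dv Hm -> (1 - sigma) * norm1 cv < pv * curv g dv Hm ->
  curv g dv Hm <= curv gb db Hm ->
  tau_update eps pv (tau_trial sigma cv gb db Hm) < pv.
Proof.
move=> /andP[e0 e1] /andP[s0 s1] cpos hlt hle.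
have cbpos : 0 < curv gb db Hm by exact: lt_le_trans hle.
have n0 := norm1_ge0 _ cv.
have pv0 : 0 < pv.
  rewrite ltNge; apply/negP => hp.
  have : 0 <= (1 - sigma) * norm1 cv by apply: mulr_ge0 => //; lra.
  nra.
have r0 : 0 <= (1 - sigma) * norm1 cv / curv gb db Hm.
  by apply: divr_ge0; [apply: mulr_ge0; [lra | exact: n0] | exact: ltW].
have rlt : (1 - sigma) * norm1 cv / curv gb db Hm < pv.
  rewrite ltr_pdivrMr //.
  apply: (lt_le_trans hlt); by rewrite ler_pM2l.
rewrite /tau_update /tau_trial (_ : (curv gb db Hm <= 0) = false); last first.
  by apply/negbTE; rewrite -ltNge.
rewrite lee_fin; case: ifP => h; first by move: h; rewrite leNgt rlt.
rewrite /=; nra.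
Qed.

Lemma tt_lt (sigma pv : R) mm k (cv : 'cV[R]_mm) (g dv : 'cV[R]_k) (Hm : 'M[R]_k) :
  (tau_trial sigma cv g dv Hm < pv%:E)%E ->
  0 < curv g dv Hm /\ (1 - sigma) * norm1 cv < pv * curv g dv Hm.
Proof.
rewrite /tau_trial; case: ifP => hc; first by rewrite ltNge leey.
have cpos : 0 < curv g dv Hm by rewrite ltNge hc.
by rewrite lte_fin ltr_pdivrMr.
Qed.

End Det.

Theorem proposition3p15
  (R : realType) (dO : measure_display) (Omega : measurableType dO)
  (P : probability Omega R) (n m : nat)
  (f : 'cV[R]_n -> R) (gradf : 'cV[R]_n -> 'cV[R]_n)
  (c : 'cV[R]_n -> 'cV[R]_m) (J : 'cV[R]_n -> 'M[R]_(m, n))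
  (X : set 'cV[R]_n) (L : R) (gam : 'I_m -> R)
  (H : nat -> 'cV[R]_n -> 'M[R]_n) (kappaH zeta M : R)
  (x0 : 'cV[R]_n) (tau_init eps sigma xi_init theta : R) (beta : nat -> R)
  (gbar : nat -> Omega -> 'cV[R]_n) (x dbar d : nat -> Omega -> 'cV[R]_n)
  (ybar y : nat -> Omega -> 'cV[R]_m) (taubar xibar alpha : nat -> Omega -> R)
  (p : R) :
  (* ---- Standing Assumption ---- *)
  open X -> convex_set X -> (forall k w, X (x k w)) ->
  (forall v, X v -> differentiable f v /\ forall u, 'D_u f v = sc (gradf v) u) ->
  {within X, continuous gradf} ->
  (exists flow : R, forall v, X v -> flow <= f v) ->
  (exists kg : R, forall v, X v -> norm2 (gradf v) <= kg) ->
  (forall v v', X v -> X v' -> norm2 (gradf v - gradf v') <= L * norm2 (v - v')) ->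
  (forall v, X v -> differentiable c v /\ forall u, 'D_u c v = J v *m u) ->
  {within X, continuous J} ->
  (exists kc : R, forall v, X v -> norm2 (c v) <= kc) ->
  (exists kJ : R, forall v, X v -> opnorm_le (J v) kJ) ->
  (forall i v v', X v -> X v' ->
     norm2 ((row i (J v))^T - (row i (J v'))^T) <= gam i * norm2 (v - v')) ->
  (exists2 smin : R, 0 < smin &
     forall v, X v -> forall u : 'cV[R]_m, smin * norm2 u <= norm2 ((J v)^T *m u)) ->
  (* ---- Matrix Assumption ---- *)
  0 < zeta ->
  (forall k w, (H k (x k w))^T = H k (x k w) /\ opnorm_le (H k (x k w)) kappaH /\
     forall u, J (x k w) *m u = 0 -> zeta * norm2 u ^+ 2 <= sc u (H k (x k w) *m u)) ->
  (* ---- Algorithm 3: inputs ---- *)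
  0 < tau_init -> 0 < eps < 1 -> 0 < sigma < 1 -> 0 < xi_init ->
  (forall k, 0 < beta k <= 1) -> 0 <= theta ->
  (* ---- Algorithm 3: iterations (pathwise, for every outcome w) ---- *)
  (forall w, x 0%N w = x0) ->
  (forall k w, H k (x k w) *m dbar k w + (J (x k w))^T *m ybar k w = - gbar k w /\
               J (x k w) *m dbar k w = - c (x k w)) ->
  (forall k w, dbar k w != 0) ->
  (forall k w, taubar k w =
     tau_update eps (if k is k'.+1 then taubar k' w else tau_init)
       (tau_trial sigma (c (x k w)) (gbar k w) (dbar k w) (H k (x k w)))) ->
  (forall k w, xibar k w =
     xi_update eps (if k is k'.+1 then xibar k' w else xi_init)
       (xi_trial (c (x k w)) (taubar k w) (gbar k w) (H k (x k w)) (dbar k w))) ->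
  (forall k w, alpha k w =
     step_size L (\sum_i gam i) theta (beta k) (taubar k w) (xibar k w)
       (c (x k w)) (gbar k w) (H k (x k w)) (dbar k w)) ->
  (forall k w, x k.+1 w = x k w + alpha k w *: dbar k w) ->
  (* deterministic counterparts *)
  (forall k w, H k (x k w) *m d k w + (J (x k w))^T *m y k w = - gradf (x k w) /\
               J (x k w) *m d k w = - c (x k w)) ->
  (* all quantities produced by the algorithm are random variables *)
  (forall k h, alg3_state H gradf c J x d y k h \/
               alg3_stoch gbar dbar ybar taubar xibar alpha k h ->
     measurable_fun setT h) ->
  (* ---- Gradient Assumption (conditioning on F_k = history up to x_k) ---- *)
  (forall k B, history_sigma (alg3_state H gradf c J x d y)
                 (alg3_stoch gbar dbar ybar taubar xibar alpha) k B ->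
     forall i, (\int[P]_(w in B) (gbar k w i 0)%:E =
                \int[P]_(w in B) (gradf (x k w) i 0)%:E)%E) ->
  (forall k B, history_sigma (alg3_state H gradf c J x d y)
                 (alg3_stoch gbar dbar ybar taubar xibar alpha) k B ->
     (\int[P]_(w in B) ((norm2 (gbar k w - gradf (x k w))) ^+ 2)%:E <= M%:E * P B)%E) ->
  (* ---- hypothesis of the proposition: P_k[...] >= p for all k ---- *)
  0 < p <= 1 ->
  (forall k B, history_sigma (alg3_state H gradf c J x d y)
                 (alg3_stoch gbar dbar ybar taubar xibar alpha) k B ->
     (p%:E * P B <=
      P ([set w | (curv (gradf (x k w)) (d k w) (H k (x k w))
                  <= curv (gbar k w) (dbar k w) (H k (x k w)))%R] `&` B))%E) ->
  (* ---- conclusion: E_{tau,big} has probability zero ---- *)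
  P.-negligible
    [set w | exists K : set nat, infinite_set K /\
       exists2 taubig : R, 0 < taubig &
         forall k, K k ->
           [/\ taubar k w = taubig,
               (tau_trial sigma (c (x k w)) (gradf (x k w)) (d k w) (H k (x k w))
                 < taubig%:E)%E
             & xibar j w @[j --> \oo] --> xibar k w]].
Proof.
move=> _ _ _ _ _ _ _ _ _ _ _ _ _ _ _ _ _ heps hsig _ _ _ _ _ _ htau _ _ _ _ hmeas _ _ hp01 hprob.
pose Fam k (h : Omega -> R) := exists j,
  ((j <= k)%N /\ alg3_state H gradf c J x d y j h) \/
  ((j < k)%N /\ alg3_stoch gbar dbar ybar taubar xibar alpha j h).
pose Gen k : set (set Omega) := [set B | exists2 h, Fam k h &
  exists2 A0 : set R, measurable A0 & B = h @^-1` A0].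
pose Fk k := history_sigma (alg3_state H gradf c J x d y)
  (alg3_stoch gbar dbar ybar taubar xibar alpha) k.
pose prev k w := if k is k'.+1 then taubar k' w else tau_init.
pose cg k w := curv (gradf (x k w)) (d k w) (H k (x k w)).
pose A k := [set w | 0 < cg k w] `&`
  [set w | (1 - sigma) * norm1 (c (x k w)) < prev k w * cg k w].
pose G k := [set w | (curv (gradf (x k w)) (d k w) (H k (x k w)) <=
  curv (gbar k w) (dbar k w) (H k (x k w)))%R].
have mgen : forall (kk : nat) (hh : Omega -> R), Fam kk hh ->
    measurable_fun (setT : set (g_sigma_algebraType (Gen kk))) hh.
  move=> kk hh Fh _ Y mY; rewrite setTI; apply: sub_sigma_algebra; exists hh => //; by exists Y.
have mst : forall (kk jj : nat) (hh : Omega -> R), (jj <= kk)%N ->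
    alg3_state H gradf c J x d y jj hh ->
    measurable_fun (setT : set (g_sigma_algebraType (Gen kk))) hh.
  by move=> kk jj hh hj hs; apply: mgen; exists jj; left.
have msto : forall (kk jj : nat) (hh : Omega -> R), (jj < kk)%N ->
    alg3_stoch gbar dbar ybar taubar xibar alpha jj hh ->
    measurable_fun (setT : set (g_sigma_algebraType (Gen kk))) hh.
  by move=> kk jj hh hj hs; apply: mgen; exists jj; right.
have mcg k j : (j <= k)%N ->
    measurable_fun (setT : set (g_sigma_algebraType (Gen k))) (cg j).
  move=> hj; apply: mcurv.
  - by move=> i; apply: (mst k j) => //; do 4 left; right; exists i, 0.
  - by move=> i; apply: (mst k j) => //; left; right; exists i, 0.
  - by move=> i i'; apply: (mst k j) => //; do 5 left; right; exists i, i'.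
have mprev k : measurable_fun (setT : set (g_sigma_algebraType (Gen k))) (prev k).
  case: k => [|k]; first exact: measurable_cst.
  by apply: (msto k.+1 k) => //; do 2 left; right.
have mA k : measurable (A k : set (g_sigma_algebraType (Gen k))).
  apply: measurableI; apply: mset_lt.
  - exact: measurable_cst.
  - exact: mcg.
  - apply: measurable_realfun.measurable_funM; first exact: measurable_cst.
    by apply: mnorm1 => i; apply: (mst k k) => //; do 3 left; right; exists i, 0.
  - by apply: measurable_realfun.measurable_funM; [exact: mprev | exact: mcg].
have mG k : measurable (G k : set (g_sigma_algebraType (Gen k.+1))).
  apply: mset_le; first exact: mcg.
  apply: mcurv.
  - by move=> i; apply: (msto k.+1 k) => //; do 5 left; exists i, 0.
  - by move=> i; apply: (msto k.+1 k) => //; do 4 left; right; exists i, 0.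
  - by move=> i i'; apply: (mst k.+1 k) => //; do 5 left; right; exists i, i'.
have hFm j B : Fk j B -> measurable B.
  move=> FB; apply: (smallest_sub (@sigma_algebra_measurable _ Omega) _ FB).
  move=> _ [h [j' [[_ hs]|[_ hs]]] [A0 mA0 ->]]; rewrite -(setTI (h @^-1` A0)).
  - by apply: (hmeas j' h) => //; left.
  - by apply: (hmeas j' h) => //; right.
have hFT j : Fk j setT := @measurableT _ (g_sigma_algebraType (Gen j)).
have hFI j B C : Fk j B -> Fk j C -> Fk j (B `&` C) :=
  @measurableI _ (g_sigma_algebraType (Gen j)) B C.
have hFS j B : Fk j B -> Fk j.+1 B.
  apply: sub_sigma_algebra2 => B0 [h [j' hj'] hA0]; exists h => //; exists j'.
  case: hj' => [[? ?]|[? ?]]; [left|right]; split => //; exact: leqW.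
have hA j : Fk j (A j) := mA j.
have hAc j : Fk j (~` A j) := measurableC (mA j).
have hG j : Fk j.+1 (~` G j) := measurableC (mG j).
apply: (negligibleS _ (negligible_bigcup
  (fun k0 => @negl_io R dO Omega P Fk A G p hFm hFT hFI hFS hA hAc hG hprob hp01 k0))).
move=> w [K [infK [taubig tb0 hK]]].
have hex nn : exists2 k, K k & (nn <= k)%N.
  apply: contrapT => hne; apply: infK.
  apply: (sub_finite_set _ (finite_II nn)) => k Kk /=.
  rewrite ltnNge; apply/negP => hk; apply: hne; by exists k.
have upd k : taubar k w <= prev k w by rewrite htau; exact: upd_le.
have mono k e : taubar (k + e)%N w <= taubar k w.
  elim: e => [|e IHe]; first by rewrite addn0.
  rewrite addnS; apply: le_trans IHe; exact: (upd (k + e).+1).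
have [k1 Kk1 _] := hex 0%N.
have hc k : (k1 <= k)%N -> taubar k w = taubig.
  move=> hk; have [hk1 _ _] := hK k1 Kk1; apply/eqP; rewrite eq_le; apply/andP; split.
  - by rewrite -hk1 -(subnKC hk); exact: mono.
  - have [k2 Kk2 hk2] := hex k; have [hk2' _ _] := hK k2 Kk2.
    by rewrite -hk2' -(subnKC hk2); exact: mono.
exists k1.+1 => //; split.
- move=> k hk [cpos hlt] hGk.
  have hl : taubar k w < prev k w.
    by rewrite htau; exact: upd_lt heps hsig cpos hlt hGk.
  move: hk hl; case: k {cpos hlt hGk} => [//|k'] hk /=.
  by rewrite (hc k'.+1) ?(hc k') // ?ltxx //; exact: ltnW.
- move=> kk; have [k' Kk' hk'] := hex (maxn kk k1.+1).
  exists k'; first by rewrite (leq_trans (leq_maxl _ _) hk').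
  have [_ htt _] := hK k' Kk'.
  have hk1 : (k1 < k')%N by rewrite (leq_trans (leq_maxr _ _) hk').
  move: hk1 htt; case: k' {Kk' hk'} => [//|k'] hk1 htt.
  have [h1 h2] := tt_lt _ _ _ _ _ _ _ _ _ htt.
  by split => //=; rewrite (hc k').
Qed.
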